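(* Let $\alpha\neq\beta$, let $(g_n)$ be as in the context, and let $x$ be a complex number (or indeterminate) with $x\neq\alpha$. Put $G(t)=\sum_{n\ge0}(\alpha-\beta)^{n-1}g_n(x)t^n$. Then, as formal power series in $t$, $$G(t)=\frac{1+t(x-\beta)(\alpha-\beta)-\sqrt{1-2t(x-\beta)(\alpha+\beta)+t^2(x-\beta)^2(\alpha-\beta)^2}+\dfrac{2(x-\alpha)}{\alpha-\beta}}{2\bigl(x-\alpha+xt(\alpha-\beta)^2\bigr)},$$ where the square root denotes the formal power series with constant term $1$.
   Context: Fix complex numbers $\alpha\neq\beta$. Define polynomials $g_n(x)\in\mathbb{C}[x]$ recursively by $g_0(x)=1$ and, for $n\ge1$, $$(x-\alpha)(\alpha-\beta)^{n-1}g_n(x)=\alpha(x-\beta)^n g_{n-1}(\alpha)-x(\alpha-\beta)^n g_{n-1}(x).$$ (The right-hand side vanishes at $x=\alpha$, so it is divisible by $x-\alpha$ and $g_n$ is a uniquely determined polynomial.) *)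

(* Defs.v *)
From HB Require Import structures.
From mathcomp Require Import all_boot all_order all_algebra.
From mathcomp Require Import complex.
Set Implicit Arguments. Unset Strict Implicit. Unset Printing Implicit Defensive.
Import Order.TTheory GRing.Theory Num.Theory.
Local Open Scope ring_scope.

Definition fps (C : Type) := nat -> C.

Definition fps_mul (C : pzRingType) (f g : fps C) : fps C :=
  fun n => \sum_(i < n.+1) f i * g (n - i)%N.

Definition fps_of_poly (C : nzRingType) (p : {poly C}) : fps C := fun n => p`_n.

(* Main.v *)
Require Import Defs.
From HB Require Import structures.
From mathcomp Require Import all_boot all_order all_algebra.
From mathcomp Require Import complex.
From mathcomp Require Import ring.
From Stdlib Require Import FunctionalExtensionality.
Import Order.TTheory GRing.Theory Num.Theory.
Local Open Scope ring_scope.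

Module Aux.
Set Implicit Arguments. Unset Strict Implicit. Unset Printing Implicit Defensive.
Lemma lin (R : comRingType) (x y l r k : R) : l = r -> x - y = k * (l - r) -> x = y.
Proof. by move=> -> /eqP; rewrite subrr mulr0 subr_eq0 => /eqP. Qed.

Lemma injcomp (F : idomainType) (P U b : {poly F}) K :
  U`_0 != 0 -> P \Po ('X * U) = 'X^K * b -> forall j, (j < K)%N -> P`_j = 0.
Proof.
move=> U0 HP j; elim/ltn_ind: j => j IH jK.
have Ht : take_poly j P = 0.
  apply/polyP=> i; rewrite coef_take_poly coef0.
  by case: ifP => // ij; apply: IH => //; apply: ltn_trans jK.
have HPd := poly_take_drop j P; rewrite Ht add0r in HPd.
rewrite -{1}HPd in HP.
have := congr1 (fun p : {poly F} => p`_j) HP.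
rewrite coefXnM jK comp_polyM rmorphXn /= comp_polyX exprMn mulrC -mulrA coefXnM ltnn subnn.
rewrite -horner_coef0 !hornerE horner_comp !hornerE !horner_coef0 coef_drop_poly add0n.
by move/eqP; rewrite mulf_eq0 expf_eq0 (negbTE U0) andbF /= => /eqP.
Qed.

Lemma tel (F : fieldType) (a b d : F) (c : nat -> F) (g : nat -> {poly F}) (xi : {poly F}) :
  g 0%N = 1 ->
  (forall n, (xi - a%:P) * (d^+n)%:P * (g n.+1 \Po xi) =
     (a * c n)%:P * (xi - b%:P)^+n.+1 - xi * (d^+n.+1)%:P * (g n \Po xi)) ->
  forall N, (xi - a%:P + xi * (d^+2)%:P * 'X) *
     (\sum_(n < N.+1) (d^+n)%:P * (g n \Po xi) * 'X^n)
   = (xi - a%:P) + (a*d)%:P * (\sum_(n < N) (c n)%:P * ((xi - b%:P) * 'X)^+n.+1)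
     + 'X^(N.+1) * (xi * (d^+2)%:P * ((d^+N)%:P * (g N \Po xi))).
Proof.
move=> g0 rec; elim=> [|N IH].
  rewrite big_ord1 big_ord0 g0 comp_polyC expr0 mulr0 addr0 expr1; ring.
rewrite big_ord_recr /= mulrDr IH big_ord_recr /=.
apply: (@lin _ _ _ _ _ (d%:P * 'X^(N.+1)) (rec N)).
rewrite !exprMn !exprS !polyCM; ring.
Qed.

Definition Cp (F : fieldType) (c : nat -> F) N : {poly F} :=
  \poly_(i < N.+1) (if i is j.+1 then c j else 0).

Lemma CpW (F : fieldType) (c : nat -> F) N (W : {poly F}) :
  Cp c N \Po W = \sum_(n < N) (c n)%:P * W^+n.+1.
Proof.
rewrite /Cp poly_def rmorph_sum big_ord_recl /= scale0r rmorph0 add0r.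
by apply: eq_bigr => i _; rewrite comp_polyZ rmorphXn /= comp_polyX mul_polyC.
Qed.

Lemma lin3 (R : comRingType) (x y l1 r1 l2 r2 l3 r3 k1 k2 k3 : R) :
  l1 = r1 -> l2 = r2 -> l3 = r3 ->
  x - y = k1 * (l1 - r1) + k2 * (l2 - r2) + k3 * (l3 - r3) -> x = y.
Proof. by move=> -> -> -> /eqP; rewrite !subrr !mulr0 !addr0 subr_eq0 => /eqP. Qed.

Definition Psi (F : fieldType) (c : nat -> F) (a b : F) N : {poly F} :=
  Cp c N - 'X + (a - b)%:P * 'X * Cp c N - a%:P * Cp c N ^+ 2.

Lemma geomI (F : fieldType) (d : F) N : exists I : {poly F},
  (1 + (d^+2)%:P * 'X) * I = 1 - 'X^(N.+1) * (-(d^+2)%:P)^+N.+1 /\ I`_0 = 1.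
Proof.
exists (\sum_(k < N.+1) (-(d^+2)%:P * 'X)^+k); split.
  have H := subrX1 (-(d^+2)%:P * 'X) N.+1.
  have H2 : (-(d^+2)%:P * 'X)^+N.+1 = 'X^(N.+1) * (-(d^+2)%:P)^+N.+1.
    by rewrite exprMn mulrC.
  rewrite H2 in H.
  by apply: (@lin _ _ _ _ _ 1 H); ring.
rewrite -horner_coef0 horner_sum big_ord_recl big1 ?addr0 => [|i _]; rewrite !hornerE.
  by [].
by rewrite expr0n.
Qed.

Lemma kernel (F : fieldType) (a b : F) (c : nat -> F) (g : nat -> {poly F}) :
  a != 0 -> a - b != 0 -> g 0%N = 1 ->
  (forall n, ('X - a%:P) * ((a - b)^+n)%:P * g n.+1 =
     (a * c n)%:P * ('X - b%:P)^+n.+1 - 'X * ((a - b)^+n.+1)%:P * g n) ->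
  forall N j, (j <= N)%N -> (Psi c a b N)`_j = 0.
Proof.
move=> a0 d0 g0 rec N.
rewrite /Psi.
move: rec d0; set d := a - b => rec d0.
have hb : b = a - d by rewrite /d; ring.
clearbody d; subst b.
have [I [EI I0]] := geomI d N.
set xi := a%:P * I.
have rec' : forall n, (xi - a%:P) * (d^+n)%:P * (g n.+1 \Po xi) =
     (a * c n)%:P * (xi - (a - d)%:P)^+n.+1 - xi * (d^+n.+1)%:P * (g n \Po xi).
  move=> n; have := congr1 (comp_poly xi) (rec n).
  rewrite !rmorphB /= !rmorphM /= !rmorphXn /= !rmorphB /= !comp_polyX !comp_polyC => H.
  by apply: (@lin _ _ _ _ _ 1 H); ring.
have T := tel g0 rec' N.
rewrite -CpW in T.
set W := (xi - (a - d)%:P) * 'X in T.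
set Tp := \sum_(n < N.+1) _ in T.
set e := xi * (d^+2)%:P * ((d^+N)%:P * _) in T.
set z := 'X^(N.+1) in T EI.
set k := (-(d^+2)%:P)^+N.+1 in EI.
set Sm := Cp c N \Po W in T.
set u := (a * d)^-1.
have hu : (a * d)%:P * u%:P = 1 by rewrite -polyCM mulfV ?polyC1 // mulf_neq0.
have ESm : Sm = d%:P * 'X * I + z * (u%:P * (- a%:P * k * Tp - e + a%:P * k)).
  apply: (lin3 (esym T) hu EI (k1 := u%:P) (k2 := d%:P * 'X * I - Sm) (k3 := u%:P * a%:P * Tp - u%:P * a%:P)).
  rewrite /xi; ring.
set e2 := u%:P * _ in ESm.
have HW : 'X * (xi - (a - d)%:P) = W by rewrite /W mulrC.
have HP : (Cp c N - 'X + d%:P * 'X * Cp c N - a%:P * Cp c N ^+ 2) \Po ('X * (xi - (a - d)%:P))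
   = z * ((a - d)%:P * 'X * k + e2 + d%:P * W * e2 - 2%:R * a%:P * (d%:P * 'X * I) * e2
          - a%:P * z * e2 ^+ 2).
  rewrite HW !rmorphB !rmorphD /= !rmorphM /= rmorphN /= !comp_polyX !comp_polyC -/Sm ESm.
  apply: (@lin _ _ _ _ _ (- ((a - d)%:P * 'X)) EI).
  rewrite /W /xi; ring.
move=> j jN; apply: (injcomp _ HP) => //.
by rewrite coefB coefCM I0 coefC /= mulr1 opprB addrC subrK.
Qed.

Lemma uniq_sqrt (F : fieldType) (f s : nat -> F) : (2%:R : F) != 0 ->
  f 0%N = 1 -> s 0%N = 1 -> (forall n, fps_mul f f n = fps_mul s s n) ->
  forall n, f n = s n.
Proof.
move=> h2 f0 s0 H n; elim/ltn_ind: n => [[|m]] IH; first by rewrite f0 s0.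
have := H m.+1; rewrite /fps_mul big_ord_recl [in RHS]big_ord_recl.
rewrite big_ord_recr [in RHS]big_ord_recr /= !subn0 !subnn f0 s0.
have -> : \sum_(i < m) f (bump 0 i) * f (m.+1 - bump 0 i)%N =
          \sum_(i < m) s (bump 0 i) * s (m.+1 - bump 0 i)%N.
  apply: eq_bigr => i _; rewrite !IH //; rewrite /bump /=.
    by rewrite subSS; apply: leq_ltn_trans (leq_subr _ _) _.
  by rewrite add1n ltnS.
rewrite /bump /= add1n.
move=> E; have E2 : (f m.+1 - s m.+1) * 2%:R = 0.
  by apply: (@lin _ _ _ _ _ 1 E); ring.
by move: E2 => /eqP; rewrite mulf_eq0 (negbTE h2) orbF subr_eq0 => /eqP.
Qed.

Definition Sf (F : fieldType) (a b : F) (c : nat -> F) (n : nat) : F :=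
  match n with 0 => 1 | m.+1 => (if m == 0%N then a - b else 0) - 2%:R * a * c m end.

Lemma SpCoef (F : fieldType) (a b : F) (c : nat -> F) N j : (j <= N)%N ->
  (1 + (a - b)%:P * 'X - (2%:R * a)%:P * Cp c N)`_j = Sf a b c j.
Proof.
move=> jN; rewrite coefB coefD coef1 coefCM coefX !coefCM /Cp coef_poly ltnS jN.
case: j jN => [|m] _ /=; first by rewrite !mulr0 subr0 addr0.
rewrite add0r; case: m => [|m] /=; first by rewrite mulr1.
by rewrite mulr0.
Qed.

Lemma SS (F : fieldType) (a b : F) (c : nat -> F) (g : nat -> {poly F}) :
  a - b != 0 -> g 0%N = 1 ->
  (forall n, ('X - a%:P) * ((a - b)^+n)%:P * g n.+1 =
     (a * c n)%:P * ('X - b%:P)^+n.+1 - 'X * ((a - b)^+n.+1)%:P * g n) ->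
  forall j, fps_mul (Sf a b c) (Sf a b c) j =
     (1 - (2%:R * (a + b))%:P * 'X + ((a - b)^+2)%:P * 'X^2 : {poly F})`_j.
Proof.
move=> d0 g0 rec j.
set Sp := 1 + (a - b)%:P * 'X - (2%:R * a)%:P * Cp c j.
have E : Sp * Sp = (1 - (2%:R * (a + b))%:P * 'X + ((a - b)^+2)%:P * 'X^2)
                   - (4%:R * a)%:P * Psi c a b j.
  rewrite /Sp /Psi; ring.
have -> : fps_mul (Sf a b c) (Sf a b c) j = (Sp * Sp)`_j.
  rewrite coefM; apply: eq_bigr => i _.
  rewrite !SpCoef //; [exact: leq_subr | by rewrite -ltnS].
rewrite E coefB coefCM.
have [->|a0] := eqVneq a 0; first by rewrite mulr0 mul0r subr0.
by rewrite (kernel a0 d0 g0 rec (leqnn j)) mulr0 subr0.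
Qed.

Lemma PQcoef (F : fieldType) (a b u : F) n :
  (1 - (2 * u * (a + b)) *: 'X + (u ^+ 2 * (a - b) ^+ 2) *: 'X ^+ 2 : {poly F})`_n =
  u ^+ n * (1 - (2%:R * (a + b))%:P * 'X + ((a - b)^+2)%:P * 'X^2 : {poly F})`_n.
Proof.
rewrite !coefD !coefN !coefZ !coefCM coef1 coefX coefXn.
case: n => [|[|[|n]]] /=; rewrite ?expr0 ?expr1; ring.
Qed.

End Aux.
Import Aux.
Local Open Scope complex_scope.

Theorem mainTheorem3 (R : rcfType) (alpha beta x : R[i])
  (g : nat -> {poly R[i]}) (sq : fps R[i]) :
  alpha != beta ->
  g 0%N = 1 ->
  (forall n : nat,
     ('X - alpha%:P) * ((alpha - beta) ^+ n)%:P * g n.+1 =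
     (alpha * (g n).[alpha])%:P * ('X - beta%:P) ^+ n.+1
     - 'X * ((alpha - beta) ^+ n.+1)%:P * g n) ->
  x != alpha ->
  sq 0%N = 1 ->
  fps_mul sq sq =
    fps_of_poly (1 - (2 * (x - beta) * (alpha + beta)) *: 'X
                 + ((x - beta) ^+ 2 * (alpha - beta) ^+ 2) *: 'X ^+ 2) ->
  let G : fps R[i] := fun n => (alpha - beta) ^+ n / (alpha - beta) * (g n).[x] in
  let D : fps R[i] := fps_of_poly (2 *: ((x - alpha)%:P + (x * (alpha - beta) ^+ 2) *: 'X)) in
  let N : fps R[i] := fun n =>
     fps_of_poly (1 + ((x - beta) * (alpha - beta)) *: 'X
                  + (2 * (x - alpha) / (alpha - beta))%:P) n - sq n in
  fps_mul D G = N.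
Proof.
move=> hab g0 rec xa sq0 sqsq G D N.
have d0 : alpha - beta != 0 by rewrite subr_eq0.
have h2 : (2%:R : R[i]) != 0 by rewrite pnatr_eq0.
pose c n := (g n).[alpha].
pose u := x - beta.
pose s n := u ^+ n * Sf alpha beta c n.
have Hs : forall n, fps_mul sq sq n = fps_mul s s n.
  move=> n; rewrite sqsq /fps_of_poly.
  have -> : fps_mul s s n = u ^+ n * fps_mul (Sf alpha beta c) (Sf alpha beta c) n.
    rewrite /fps_mul mulr_sumr; apply: eq_bigr => i _.
    rewrite /s mulrACA -exprD subnKC //; by rewrite -ltnS.
  by rewrite (SS d0 g0 rec) -PQcoef.
have s0 : s 0%N = 1 by rewrite /s expr0 mulr1.
have Esq := uniq_sqrt h2 sq0 s0 Hs.
apply: functional_extensionality => n.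
case: n => [|m].
  rewrite /fps_mul big_ord1 /D /G /N /fps_of_poly sq0 g0 subnn.
  rewrite !coefZ !coefD !coefC !coefZ !coefX /= -polyC1 hornerC expr0.
  by field.
rewrite /fps_mul big_ord_recl big_ord_recl big1 => [|i _]; last first.
  by rewrite /D /fps_of_poly !coefZ !coefD !coefC !coefZ !coefX /= mulr0 addr0 mulr0 mul0r.
have Hx := congr1 (fun p => p.[x]) (rec m); rewrite /= !(hornerD, hornerN, hornerX, hornerC, horner_exp, hornerCM, hornerZ, hornerM) in Hx.
rewrite /N /D /G /fps_of_poly Esq /s /Sf /u -/(c m) -/(c m.+1) in Hx *.
rewrite !coefZ !coefD !coefC !coefZ !coefX /= !subn0 ?subSS ?subn0.

case: m Hx => [|m] Hx /=.
  by apply: (@lin _ _ _ _ _ 2 Hx); rewrite !exprS; field.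
by apply: (@lin _ _ _ _ _ 2 Hx); rewrite !exprS; field.
Qed.
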